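(* Let $(D,\sqsubseteq)$ be a dcpo with its Scott topology, $B\subseteq D$, $A\in\mathbf{\Delta}^0_2(D)$, and $0<\alpha<\aleph_1$. (1) If $A\in\mathbf{D}_\alpha(D)$, then there is no $\sqsubseteq$-increasing $(A,1)$-alternating $B$-tree of rank $\alpha$. (2) If $D$ is a continuous domain with basis $B$, the following are equivalent: (i) $A\in\mathbf{D}_\alpha(D)$; (ii) there is no $\sqsubseteq$-increasing $(A,1)$-alternating $B$-tree of rank $\alpha$; (iii) there is no $\ll$-increasing $(A,1)$-alternating $B$-tree of rank $\alpha$.
   Context: Dcpo: poset in which every nonempty directed set has a supremum; Scott topology: open sets are upsets $O$ such that every directed set with supremum in $O$ meets $O$. Way-below: $x\ll y$ iff for every directed $S$ with $y\sqsubseteq\sqcup S$ some $s\in S$ has $x\sqsubseteq s$. Continuous domain with basis $B$: for every $x$, $B\cap\{z:z\ll x\}$ is directed with supremum $x$. $\mathbf{\Sigma}^0_2(D)$: countable unions of differences of Scott open sets; $\mathbf{\Pi}^0_2(D)$: complements; $\mathbf{\Delta}^0_2(D)$: both. Parity: ordinal $\lambda+n$ ($\lambda$ zero or limit, $n<\omega$) has the parity of $n$; $\beta\sim\alpha$ means same parity. $D_\alpha((A_\beta)_{\beta<\alpha})=\bigcup_{\beta<\alpha,\beta\not\sim\alpha}(A_\beta\setminus\bigcup_{\gamma<\beta}A_\gamma)$; $\mathbf{D}_\alpha(D)$ is the class of such sets with all $A_\beta$ Scott open. Trees: a tree is a nonempty set of finite sequences (over some set) closed under prefixes, with root the empty sequence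 $\mathit{nil}$; well-founded means no infinite branch; for well-founded $T$, $\mathrm{rank}_T(\sigma)=\sup\{\mathrm{rank}_T(\sigma a)+1:\sigma a\in T\}$ (with $\sup\emptyset=0$), and the rank of $T$ is $\mathrm{rank}_T(\mathit{nil})$. A $B$-tree is a map $f:T\to B$ with $T$ a tree; its rank is that of $T$. It is $(A,\varepsilon)$-alternating if ($f(\mathit{nil})\in A$ iff $\varepsilon=1$) and $f(\sigma a)\in A\iff f(\sigma)\notin A$ for all $\sigma,\sigma a\in T$. For $\preceq\in\{\sqsubseteq,\ll\}$, $f$ is $\preceq$-increasing if $f(\sigma)\preceq f(\sigma a)$ for all $\sigma,\sigma a\in T$. *)

(* Defs.v *)
From Stdlib Require Import List Arith.
Import ListNotations.

(* Countable ordinals as Brouwer ordinals (every ordinal < aleph_1 has *)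
(* a representative; OL f denotes the supremum of the f n).            *)
Inductive Ord : Type :=
| OZ : Ord
| OS : Ord -> Ord
| OL : (nat -> Ord) -> Ord.

Inductive ole : Ord -> Ord -> Prop :=
| ole_Z y : ole OZ y
| ole_SS x y : ole x y -> ole (OS x) (OS y)
| ole_S_r x y : ole x y -> ole x (OS y)
| ole_lim_l f y : (forall n, ole (f n) y) -> ole (OL f) y
| ole_lim_r x f n : ole x (f n) -> ole x (OL f).

Definition olt (x y : Ord) : Prop := ole (OS x) y.
Definition oeq (x y : Ord) : Prop := ole x y /\ ole y x.

Definition lim0 (l : Ord) : Prop := forall g, olt g l -> olt (OS g) l.

Fixpoint oaddn (l : Ord) (n : nat) : Ord :=
  match n with 0 => l | S m => OS (oaddn l m) end.

(* parity: the ordinal lambda + n (lambda zero or limit) is odd iff n is odd *)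
Definition oodd (b : Ord) : Prop :=
  exists l n, lim0 l /\ oeq b (oaddn l n) /\ Nat.odd n = true.

Definition osim (b a : Ord) : Prop := oodd b <-> oodd a.

Section Order.
Context {D : Type} (le : D -> D -> Prop).

Definition directed (S : D -> Prop) : Prop :=
  (exists s, S s) /\
  forall x y, S x -> S y -> exists z, S z /\ le x z /\ le y z.

Definition is_sup (S : D -> Prop) (x : D) : Prop :=
  (forall s, S s -> le s x) /\ (forall u, (forall s, S s -> le s u) -> le x u).

Definition is_dcpo : Prop :=
  (forall x, le x x) /\
  (forall x y z, le x y -> le y z -> le x z) /\
  (forall x y, le x y -> le y x -> x = y) /\
  (forall S, directed S -> exists x, is_sup S x).

Definition scott_open (O : D -> Prop) : Prop :=
  (forall x y, O x -> le x y -> O y) /\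
  (forall S x, directed S -> is_sup S x -> O x -> exists s, S s /\ O s).

Definition way_below (x y : D) : Prop :=
  forall S, directed S -> (forall s, is_sup S s -> le y s) ->
    exists s, S s /\ le x s.

Definition continuous_domain (B : D -> Prop) : Prop :=
  is_dcpo /\
  forall x, directed (fun z => B z /\ way_below z x) /\
            is_sup (fun z => B z /\ way_below z x) x.

Definition Sigma02 (A : D -> Prop) : Prop :=
  exists U V : nat -> D -> Prop,
    (forall n, scott_open (U n)) /\ (forall n, scott_open (V n)) /\
    forall x, A x <-> exists n, U n x /\ ~ V n x.

Definition Pi02 (A : D -> Prop) : Prop := Sigma02 (fun x => ~ A x).

Definition Delta02 (A : D -> Prop) : Prop := Sigma02 A /\ Pi02 A.

Definition Dop (alpha : Ord) (Af : Ord -> D -> Prop) (x : D) : Prop :=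
  exists b, olt b alpha /\ ~ osim b alpha /\ Af b x /\
    ~ (exists g, olt g b /\ Af g x).

(* A in D_alpha(D): A = D_alpha((A_b)_{b<alpha}) with all A_b Scott open.
   Families are given as maps on representatives; they must respect
   equality of ordinals. *)
Definition in_Dalpha (alpha : Ord) (A : D -> Prop) : Prop :=
  exists Af : Ord -> D -> Prop,
    (forall b b', olt b alpha -> oeq b b' -> forall x, Af b x <-> Af b' x) /\
    (forall b, olt b alpha -> scott_open (Af b)) /\
    (forall x, A x <-> Dop alpha Af x).

End Order.

(* Trees: sets of finite sequences over X, sigma a := sigma ++ [a].    *)
Definition is_tree {X : Type} (T : list X -> Prop) : Prop :=
  (exists s, T s) /\ (forall s t, T (s ++ t) -> T s).

(* rank_le T s g : rank_T(s) <= g, where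
   rank_T(s) = sup { rank_T(s a) + 1 : s a in T }.  (Holds only when the
   subtree below s is well founded.) *)
Inductive rank_le {X : Type} (T : list X -> Prop) : list X -> Ord -> Prop :=
| rank_le_intro s g :
    (forall a, T (s ++ [a]) -> exists d, olt d g /\ rank_le T (s ++ [a]) d) ->
    rank_le T s g.

Definition has_rank {X : Type} (T : list X -> Prop) (alpha : Ord) : Prop :=
  rank_le T [] alpha /\ forall b, olt b alpha -> ~ rank_le T [] b.

Definition alternating {D X : Type} (T : list X -> Prop) (f : list X -> D)
  (A : D -> Prop) (eps : bool) : Prop :=
  (A (f []) <-> eps = true) /\
  forall s a, T s -> T (s ++ [a]) -> (A (f (s ++ [a])) <-> ~ A (f s)).

Definition increasing {D X : Type} (R : D -> D -> Prop) (T : list X -> Prop)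
  (f : list X -> D) : Prop :=
  forall s a, T s -> T (s ++ [a]) -> R (f s) (f (s ++ [a])).

Definition exists_alt_tree {D : Type} (R : D -> D -> Prop) (B A : D -> Prop)
  (alpha : Ord) : Prop :=
  exists (X : Type) (T : list X -> Prop) (f : list X -> D),
    is_tree T /\ (forall s, T s -> B (f s)) /\
    alternating T f A true /\ increasing R T f /\ has_rank T alpha.

(* Main.v *)
Require Import Defs.
From Stdlib Require Import List Arith Classical ClassicalEpsilon.
Import ListNotations.

Lemma ole_refl : forall x, ole x x.
Proof.
  induction x.
  - constructor.
  - apply ole_SS; auto.
  - apply ole_lim_l. intro n. eapply ole_lim_r. apply H.
Qed.

Lemma ole_xS : forall x, ole x (OS x).
Proof. intro x. apply ole_S_r, ole_refl. Qed.

Lemma ole_OZ_any : forall x, ole x OZ -> forall z, ole x z.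
Proof.
  intros x H. remember OZ as w. induction H; intros; try discriminate.
  - constructor.
  - apply ole_lim_l. intro n. apply H0; auto.
Qed.

Lemma ole_trans0 : forall y z, ole y z -> forall x, ole x y -> ole x z.
Proof.
  induction 1.
  - intros x Hx. apply ole_OZ_any; auto.
  - intros x0 Hx. remember (OS x) as w. induction Hx; try discriminate.
    + constructor.
    + injection Heqw as ->. apply ole_SS; auto.
    + injection Heqw as ->. apply ole_S_r; auto.
    + apply ole_lim_l. intro n. apply H1; auto.
  - intros x0 Hx. apply ole_S_r; auto.
  - intros x Hx. remember (OL f) as w. induction Hx; try discriminate.
    + constructor.
    + apply ole_lim_l. intro n. apply H2; auto.
    + injection Heqw as ->. eapply H0; eauto.
  - intros x0 Hx. eapply ole_lim_r. apply IHole; auto.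
Qed.

Lemma ole_trans : forall x y z, ole x y -> ole y z -> ole x z.
Proof. intros. eapply ole_trans0; eauto. Qed.

Lemma ole_Sl : forall x y, ole (OS x) y -> ole x y.
Proof. intros. eapply ole_trans; [apply ole_xS|eauto]. Qed.

Lemma ole_SS_inv : forall x y, ole (OS x) (OS y) -> ole x y.
Proof. intros x y H. inversion H; subst; auto. apply ole_Sl; auto. Qed.

Lemma not_ole_S_Z : forall x, ~ ole (OS x) OZ.
Proof. intros x H. inversion H. Qed.

Lemma olt_acc : forall y x, olt x y -> Acc olt x.
Proof.
  induction y as [|y IHy|f IHf]; intros x H; unfold olt in *.
  - inversion H.
  - apply ole_SS_inv in H. constructor. intros z Hz. apply IHy.
    unfold olt. eapply ole_trans; eauto.
  - inversion H; subst. eapply IHf; eauto.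
Qed.

Lemma olt_wf : well_founded olt.
Proof. intro x. apply (olt_acc (OS x)). apply ole_refl. Qed.

Lemma olt_irrefl : forall x, ~ olt x x.
Proof.
  intro x. induction (olt_wf x) as [x _ IH]. intro H. apply (IH x H H).
Qed.

Lemma olt_ole : forall x y, olt x y -> ole x y.
Proof. intros. apply ole_Sl; auto. Qed.

Lemma olt_ole_trans : forall x y z, olt x y -> ole y z -> olt x z.
Proof. unfold olt; intros. eapply ole_trans; eauto. Qed.

Lemma ole_olt_trans : forall x y z, ole x y -> olt y z -> olt x z.
Proof. unfold olt; intros. eapply ole_trans; eauto. apply ole_SS; auto. Qed.

Lemma olt_trans : forall x y z, olt x y -> olt y z -> olt x z.
Proof. intros. eapply olt_ole_trans; eauto. apply olt_ole; auto. Qed.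

Lemma ole_total : forall a y, ole a y \/ olt y a.
Proof.
  unfold olt. induction a.
  - left; constructor.
  - induction y.
    + right. apply ole_SS. constructor.
    + destruct (IHa y) as [H|H].
      * left. apply ole_SS; auto.
      * right. apply ole_SS; auto.
    + destruct (classic (exists n, ole (OS a) (o n))) as [[n Hn]|Hn].
      * left. eapply ole_lim_r; eauto.
      * right. apply ole_SS. apply ole_lim_l. intro n.
        destruct (H n) as [H'|H'].
        -- exfalso; eauto.
        -- apply ole_SS_inv; auto.
  - intro y. destruct (classic (forall n, ole (o n) y)) as [Hy|Hy].
    + left. apply ole_lim_l; auto.
    + apply not_all_ex_not in Hy. destruct Hy as [n Hn].
      right. destruct (H n y) as [H'|H']; [contradiction|].
      eapply ole_lim_r; eauto.
Qed.

Lemma ord_min : forall P : Ord -> Prop, (exists x, P x) ->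
  exists x, P x /\ forall y, olt y x -> ~ P y.
Proof.
  intros P [x Hx]. apply NNPP. intro Hn.
  assert (forall z, ~ P z).
  { intro z. induction (olt_wf z) as [z _ IH]. intro Hz. apply Hn.
    exists z. split; auto. }
  eapply H; eauto.
Qed.

Lemma oeq_sym : forall a b, oeq a b -> oeq b a.
Proof. unfold oeq; tauto. Qed.
Lemma oeq_trans : forall a b c, oeq a b -> oeq b c -> oeq a c.
Proof. unfold oeq; intros a b c [] []; split; eapply ole_trans; eauto. Qed.
Lemma oeq_S : forall a b, oeq a b -> oeq (OS a) (OS b).
Proof. unfold oeq; intros a b []; split; apply ole_SS; auto. Qed.

Lemma decomp_uniq : forall n l n' l', lim0 l -> lim0 l' ->
  oeq (oaddn l n) (oaddn l' n') -> n = n'.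
Proof.
  assert (K : forall l l' m, lim0 l -> oeq l (oaddn l' (S m)) -> False).
  { intros l l' m Hl [H1 H2]. simpl in *.
    assert (olt (oaddn l' m) l) by exact H2.
    apply Hl in H. unfold olt in H.
    apply (olt_irrefl (OS (oaddn l' m))). unfold olt. eapply ole_trans; eauto. }
  induction n; intros l [|n'] l' Hl Hl' H; simpl in *; auto.
  - exfalso; apply (K l l' n' Hl H).
  - exfalso; apply (K l' l n Hl'). apply oeq_sym; exact H.
  - f_equal. apply (IHn l n' l' Hl Hl'). destruct H; split; apply ole_SS_inv; auto.
Qed.

Lemma decomp_ex : forall g, exists l n, lim0 l /\ oeq g (oaddn l n).
Proof.
  intro g. induction (olt_wf g) as [g _ IH].
  destruct (classic (lim0 g)) as [Hg|Hg].
  - exists g, 0. split; auto. split; apply ole_refl.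
  - unfold lim0 in Hg. apply not_all_ex_not in Hg. destruct Hg as [h Hh].
    apply imply_to_and in Hh. destruct Hh as [Hh1 Hh2].
    destruct (IH h Hh1) as [l [n [Hl Heq]]].
    exists l, (S n). split; auto. simpl.
    apply oeq_trans with (OS h); [|apply oeq_S; auto].
    split; auto. destruct (ole_total g (OS h)); auto. contradiction.
Qed.

Lemma oodd_oeq : forall a b, oeq a b -> oodd a -> oodd b.
Proof.
  intros a b H [l [n [Hl [He Ho]]]]. exists l, n. split; auto. split; auto.
  eapply oeq_trans; eauto. apply oeq_sym; auto.
Qed.

Lemma oodd_S : forall g, oodd (OS g) <-> ~ oodd g.
Proof.
  intro g. destruct (decomp_ex g) as [l [n [Hl He]]].
  assert (HS : oeq (OS g) (oaddn l (S n))) by (apply oeq_S; auto).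
  split.
  - intros [l1 [n1 [Hl1 [He1 Ho1]]]] [l2 [n2 [Hl2 [He2 Ho2]]]].
    assert (n1 = S n) by exact (decomp_uniq n1 l1 (S n) l Hl1 Hl (oeq_trans _ _ _ (oeq_sym _ _ He1) HS)).
    assert (n2 = n) by exact (decomp_uniq n2 l2 n l Hl2 Hl (oeq_trans _ _ _ (oeq_sym _ _ He2) He)).
    subst. rewrite Nat.odd_succ, <- Nat.negb_odd, Ho2 in Ho1. discriminate.
  - intro Hn. exists l, (S n). split; auto. split; auto.
    rewrite Nat.odd_succ, <- Nat.negb_odd. destruct (Nat.odd n) eqn:E; auto.
    exfalso. apply Hn. exists l, n. auto.
Qed.

Lemma osim_oeq : forall a b c, oeq a b -> (osim a c <-> osim b c).
Proof.
  unfold osim. intros a b c H. pose proof (oodd_oeq _ _ H). pose proof (oodd_oeq _ _ (oeq_sym _ _ H)). tauto.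
Qed.

Lemma osim_S : forall a c, osim (OS a) c <-> ~ osim a c.
Proof. unfold osim. intros. rewrite oodd_S. tauto. Qed.

Lemma wb_le {D} (le : D -> D -> Prop) (Hd : is_dcpo le) x y :
  way_below le x y -> le x y.
Proof.
  intro H. destruct Hd as [Hr _].
  destruct (H (fun z => z = y)) as [s [-> Hs]]; auto.
  - split; [exists y; auto|]. intros a b -> ->. exists y; auto.
  - intros s [Hs _]. apply Hs; auto.
Qed.

Lemma wb_le_trans {D} (le : D -> D -> Prop) (Hd : is_dcpo le) a b c :
  way_below le a b -> le b c -> way_below le a c.
Proof.
  intros H Hbc S dS Hs. apply H; auto. intros s hs.
  destruct Hd as [_ [Ht _]]. eapply Ht; eauto.
Qed.

Lemma le_wb_trans {D} (le : D -> D -> Prop) (Hd : is_dcpo le) a b c :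
  le a b -> way_below le b c -> way_below le a c.
Proof.
  intros H Hbc S dS Hs. destruct (Hbc S dS Hs) as [s [Ss Hs']].
  exists s; split; auto. destruct Hd as [_ [Ht _]]. eapply Ht; eauto.
Qed.

Lemma wb_sup {D} (le : D -> D -> Prop) b x S :
  way_below le b x -> directed le S -> is_sup le S x -> exists s, S s /\ le b s.
Proof.
  intros H dS Hx. apply H; auto. intros s hs. apply (proj2 Hx). apply (proj1 hs).
Qed.

Lemma interp {D} (le : D -> D -> Prop) (B : D -> Prop)
  (Hc : continuous_domain le B) b x :
  way_below le b x -> exists c, B c /\ way_below le b c /\ way_below le c x.
Proof.
  intro Hb. destruct Hc as [Hd Hap].
  pose proof Hd as Hd'. destruct Hd' as [Hr [Ht _]].
  set (S := fun d => B d /\ exists c, B c /\ way_below le d c /\ way_below le c x).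
  assert (dS : directed le S).
  { split.
    - destruct (Hap x) as [[[c [Bc Hc]] _] _].
      destruct (Hap c) as [[[d [Bd Hd2]] _] _].
      exists d. split; auto. exists c; auto.
    - intros d1 d2 [B1 [c1 [Bc1 [H1 H1']]]] [B2 [c2 [Bc2 [H2 H2']]]].
      destruct (Hap x) as [[_ Hdir] _].
      destruct (Hdir c1 c2) as [c3 [[Bc3 Hc3] [Hl1 Hl2]]]; auto.
      assert (E1 : way_below le d1 c3) by (eapply wb_le_trans; eauto).
      assert (E2 : way_below le d2 c3) by (eapply wb_le_trans; eauto).
      destruct (Hap c3) as [Hdir3 Hsup3].
      destruct (wb_sup le _ _ _ E1 Hdir3 Hsup3) as [e1 [[Be1 He1] Hle1]].
      destruct (wb_sup le _ _ _ E2 Hdir3 Hsup3) as [e2 [[Be2 He2] Hle2]].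
      destruct (proj2 Hdir3 e1 e2) as [e [[Be He] [Hee1 Hee2]]]; auto.
      exists e. split; [split; auto; exists c3; auto|].
      split; eapply Ht; eauto. }
  assert (sS : is_sup le S x).
  { split.
    - intros d [Bd [c [Bc [H1 H2]]]]. eapply Ht; apply wb_le; eauto.
    - intros u Hu. apply (proj2 (proj2 (Hap x))). intros c [Bc Hcx].
      apply (proj2 (proj2 (Hap c))). intros d [Bd Hdc].
      apply Hu. split; auto. exists c; auto. }
  destruct (wb_sup le _ _ _ Hb dS sS) as [s [[Bs [c [Bc [H1 H2]]]] Hbs]].
  exists c. split; auto. split; auto. eapply le_wb_trans; eauto.
Qed.

Lemma sig_robust {D} (le : D -> D -> Prop) (B : D -> Prop)
  (Hc : continuous_domain le B) (P : D -> Prop) (HP : Sigma02 le P) y :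
  P y -> exists c, B c /\ way_below le c y /\ forall e, le c e -> le e y -> P e.
Proof.
  intro Py. destruct HP as [U [V [HU [HV HP]]]].
  destruct (proj1 (HP y) Py) as [n [Un Vn]].
  destruct Hc as [Hd Hap]. destruct (Hap y) as [Hdir Hsup].
  destruct (proj2 (HU n) _ _ Hdir Hsup Un) as [c [[Bc Hcy] Uc]].
  exists c. split; auto. split; auto. intros e H1 H2.
  apply HP. exists n. split.
  - eapply (proj1 (HU n)); eauto.
  - intro Ve. apply Vn. eapply (proj1 (HV n)); eauto.
Qed.

Lemma robust {D} (le : D -> D -> Prop) (B A : D -> Prop)
  (Hc : continuous_domain le B) (HA : Delta02 le A) y :
  exists c, B c /\ way_below le c y /\ forall e, le c e -> le e y -> (A e <-> A y).
Proof.
  destruct HA as [H1 H2]. destruct (classic (A y)) as [Ay|Ay].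
  - destruct (sig_robust le B Hc A H1 y Ay) as [c [? [? Hc']]].
    exists c; split; [|split]; auto. intros e He1 He2; split; intro; auto.
  - destruct (sig_robust le B Hc _ H2 y Ay) as [c [? [? Hc']]].
    exists c; split; [|split]; auto. intros e He1 He2; split; intro He3.
    + exfalso; apply (Hc' e); auto.
    + contradiction.
Qed.

Lemma robust_above {D} (le : D -> D -> Prop) (B A : D -> Prop)
  (Hc : continuous_domain le B) (HA : Delta02 le A) b y :
  B b -> way_below le b y ->
  exists d, B d /\ way_below le d y /\ le b d /\ (A d <-> A y).
Proof.
  intros Bb Hb. destruct (robust le B A Hc HA y) as [c [Bc [Hcy Hr]]].
  pose proof Hc as [Hd Hap]. destruct (Hap y) as [[_ Hdir] _].
  destruct (Hdir b c) as [d [[Bd Hdy] [H1 H2]]]; auto.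
  exists d. repeat split; auto; apply Hr; auto; eapply wb_le; eauto.
Qed.

Lemma Dop_char {D} (alpha : Ord) (Af : Ord -> D -> Prop) (A : D -> Prop)
  (HAf : forall x, A x <-> Dop alpha Af x) beta x :
  Af beta x -> (forall g, olt g beta -> ~ Af g x) -> olt beta alpha ->
  (A x <-> ~ osim beta alpha).
Proof.
  intros H1 H2 H3. rewrite HAf. split.
  - intros [b [Hb1 [Hb2 [Hb3 Hb4]]]].
    assert (oeq b beta).
    { split.
      - destruct (ole_total b beta) as [?|Hl]; auto.
        exfalso; apply Hb4; exists beta; auto.
      - destruct (ole_total beta b) as [?|Hl]; auto.
        exfalso; eapply H2; eauto. }
    rewrite <- (osim_oeq _ _ _ H). auto.
  - intro Hs. exists beta. repeat split; auto. intros [g [Hg1 Hg2]]. eapply H2; eauto.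
Qed.

Lemma part1 {D} (le : D -> D -> Prop) (B A : D -> Prop) alpha :
  in_Dalpha le alpha A -> ~ exists_alt_tree le B A alpha.
Proof.
  intros [Af [Hresp [Hopen HAf]]] [X [T [f [Htree [HB [[Hroot Halt] [Hinc [Hr1 Hr2]]]]]]]].
  assert (Hpre : forall s a, T (s ++ [a]) -> T s) by (intros; eapply (proj2 Htree); eauto).
  assert (Claim : forall beta s, T s -> Af beta (f s) -> (forall g, olt g beta -> ~ Af g (f s)) ->
                  olt beta alpha -> rank_le T s beta).
  { intro beta. induction (olt_wf beta) as [beta _ IH].
    intros s Ts H1 H2 H3. constructor. intros a Ha.
    assert (Hup : Af beta (f (s ++ [a]))).
    { eapply (proj1 (Hopen beta H3)); eauto. }
    destruct (ord_min (fun g => Af g (f (s ++ [a])))) as [b' [Hb1 Hb2]]; [eauto|].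
    assert (Hle : ole b' beta).
    { destruct (ole_total b' beta) as [?|Hl]; auto. exfalso; eapply Hb2; eauto. }
    assert (Hb'a : olt b' alpha) by (eapply ole_olt_trans; eauto).
    destruct (classic (olt b' beta)) as [Hlt|Hnlt].
    - exists b'. split; [auto|apply IH; auto].
    - exfalso.
      assert (Heq : oeq b' beta).
      { split; auto. destruct (ole_total beta b') as [?|?]; auto. contradiction. }
      pose proof (Dop_char alpha Af A HAf _ _ H1 H2 H3) as E1.
      pose proof (Dop_char alpha Af A HAf _ _ Hb1 Hb2 Hb'a) as E2.
      rewrite (osim_oeq _ _ _ Heq) in E2.
      pose proof (Halt s a Ts Ha). tauto. }
  assert (Ar : A (f [])) by (apply Hroot; auto).
  destruct (proj1 (HAf _) Ar) as [b [Hb1 [Hb2 [Hb3 Hb4]]]].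
  apply (Hr2 b Hb1). apply Claim; auto.
  - destruct Htree as [[s0 Hs0] Hp]. apply (Hp [] s0). exact Hs0.
  - intros g Hg Hg'. apply Hb4. eauto.
Qed.

Inductive rkle {D} (le : D -> D -> Prop) (B A : D -> Prop) : D -> Ord -> Prop :=
| rk_intro x g :
   (forall d, B d -> le x d -> (A d <-> ~ A x) -> exists e, olt e g /\ rkle le B A d e) ->
   rkle le B A x g.

Lemma rk_R1 {D} (le : D -> D -> Prop) (Hd : is_dcpo le) B A x y g :
  rkle le B A x g -> le x y -> (A x <-> A y) -> rkle le B A y g.
Proof.
  intros H Hxy HA. inversion H; subst. constructor. intros d Bd Hyd Had.
  apply H0; auto.
  - destruct Hd as [_ [Ht _]]. eapply Ht; eauto.
  - rewrite HA; auto.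
Qed.

Definition good (alpha : Ord) (P : Prop) (g e : Ord) : Prop :=
  ole g e /\ ole e (OS g) /\ (P -> ~ osim e alpha) /\ (~ P -> osim e alpha).

Lemma good_ex alpha P g : exists e, good alpha P g e.
Proof.
  destruct (classic P) as [HP|HP]; destruct (classic (osim g alpha)) as [Hs|Hs].
  - exists (OS g). split; [|split; [|split]]; [apply ole_xS|apply ole_refl| |]; intros; try contradiction.
    rewrite osim_S; auto.
  - exists g. split; [|split; [|split]]; [apply ole_refl|apply ole_xS| |]; intros; try contradiction; auto.
  - exists g. split; [|split; [|split]]; [apply ole_refl|apply ole_xS| |]; intros; try contradiction; auto.
  - exists (OS g). split; [|split; [|split]]; [apply ole_xS|apply ole_refl| |]; intros; try contradiction.
    rewrite osim_S; auto.
Qed.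

Lemma lemU {D} (le : D -> D -> Prop) (B A : D -> Prop)
  (Hc : continuous_domain le B) (HA : Delta02 le A) alpha b y g e :
  B b -> way_below le b y -> rkle le B A b g -> good alpha (A b) g e ->
  exists d g' e', B d /\ way_below le d y /\ (A d <-> A y) /\ rkle le B A d g' /\
     good alpha (A d) g' e' /\ ole e' e.
Proof.
  intros Bb Hby Hrk Hg.
  destruct (robust_above le B A Hc HA b y Bb Hby) as [d [Bd [Hdy [Hbd Had]]]].
  pose proof (proj1 Hc) as Hd.
  destruct (classic (A d <-> A b)) as [Hs|Hs].
  - exists d, g, e. split; [auto|split; [auto|split; [auto|split; [|split]]]].
    + apply (rk_R1 le Hd B A b d g); auto. tauto.
    + destruct Hg as [? [? [? ?]]]; split; [|split; [|split]]; auto; intros; [apply H1|apply H2]; tauto.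
    + apply ole_refl.
  - inversion Hrk; subst.
    destruct (H d Bd Hbd) as [g' [Hg' Hrk']]. { tauto. }
    destruct (good_ex alpha (A d) g') as [e' He'].
    exists d, g', e'. split; [auto|split; [auto|split; [auto|split; [auto|split; [auto|]]]]].
    destruct He' as [He1 [He2 _]]. destruct Hg as [Hg1 _].
    eapply ole_trans; [exact He2|]. eapply ole_trans; [exact Hg'|exact Hg1].
Qed.

Definition tval {D} (b : D) (r : list (D * Ord)) : D :=
  match r with [] => b | p :: _ => fst p end.
Definition tlab {D} (alpha : Ord) (r : list (D * Ord)) : Ord :=
  match r with [] => alpha | p :: _ => snd p end.
Definition stepc {D} (le : D -> D -> Prop) (B A : D -> Prop) (x : D) (g : Ord) (p : D * Ord) : Prop :=
  B (fst p) /\ le x (fst p) /\ (A (fst p) <-> ~ A x) /\ olt (snd p) g /\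
  forall e, olt e (snd p) -> ~ rkle le B A (fst p) e.
Fixpoint tgood {D} (le : D -> D -> Prop) (B A : D -> Prop) b alpha (r : list (D * Ord)) : Prop :=
  match r with
  | [] => True
  | p :: r' => tgood le B A b alpha r' /\ stepc le B A (tval b r') (tlab alpha r') p
  end.

Lemma tgood_app {D} le B A (b : D) alpha u v : tgood le B A b alpha (u ++ v) -> tgood le B A b alpha v.
Proof. induction u; simpl; tauto. Qed.

Lemma bound_rk {D} (le : D -> D -> Prop) (B A : D -> Prop) alpha b :
  ~ exists_alt_tree le B A alpha -> B b -> A b ->
  exists g, olt g alpha /\ rkle le B A b g.
Proof.
  intros Hno Bb Ab. apply NNPP. intro Hn.
  assert (Hroot : forall e, olt e alpha -> ~ rkle le B A b e) by (intros e H1 H2; apply Hn; eauto).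
  apply Hno. clear Hno Hn.
  set (T := fun l : list (D * Ord) => tgood le B A b alpha (rev l)).
  set (f := fun l : list (D * Ord) => tval b (rev l)).
  assert (Tsnoc : forall s a, T (s ++ [a]) <-> T s /\ stepc le B A (f s) (tlab alpha (rev s)) a).
  { intros s a. unfold T, f. rewrite rev_unit. simpl. tauto. }
  assert (fsnoc : forall s (a : D * Ord), f (s ++ [a]) = fst a).
  { intros s a. unfold f. rewrite rev_unit. reflexivity. }
  assert (lsnoc : forall s (a : D * Ord), tlab alpha (rev (s ++ [a])) = snd a).
  { intros s a. rewrite rev_unit. reflexivity. }
  assert (K1 : forall g s, T s -> tlab alpha (rev s) = g -> rank_le T s g).
  { intro g. induction (olt_wf g) as [g _ IH]. intros s Ts Hl. constructor.
    intros a Ha. apply Tsnoc in Ha as Ha'. destruct Ha' as [_ [_ [_ [_ [Hlt _]]]]].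
    rewrite Hl in Hlt. exists (snd a). split; [auto|]. apply IH; [auto|auto|apply lsnoc]. }
  assert (K2 : forall g s, T s -> tlab alpha (rev s) = g ->
                 (forall e, olt e g -> ~ rkle le B A (f s) e) ->
                 forall e, olt e g -> ~ rank_le T s e).
  { intro g. induction (olt_wf g) as [g _ IH]. intros s Ts Hl Hinv e He Hr.
    pose proof (Hinv e He) as Hne.
    assert (Hex : exists d, B d /\ le (f s) d /\ (A d <-> ~ A (f s)) /\
                    ~ exists e', olt e' e /\ rkle le B A d e').
    { apply NNPP. intro Hc. apply Hne. constructor. intros d Bd Hd HAd.
      apply NNPP. intro Hc2. apply Hc. exists d. auto. }
    destruct Hex as [d [Bd [Hd [HAd Hnd]]]].
    assert (Ta : T (s ++ [(d, e)])).
    { apply Tsnoc. split; auto. unfold stepc; simpl. rewrite Hl.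
      split; [auto|split; [auto|split; [auto|split; [auto|]]]].
      intros e' He' Hr'. apply Hnd. eauto. }
    inversion Hr; subst.
    destruct (H (d, e) Ta) as [e'' [He'' Hr'']].
    eapply (IH e He (s ++ [(d, e)]) Ta); eauto.
    intros e1 He1 Hr1. rewrite fsnoc in Hr1. apply Hnd. eauto. }
  assert (T0 : T []) by (unfold T; simpl; auto).
  exists (D * Ord)%type, T, f. split; [|split; [|split; [|split]]].
  - split; [exists []; auto|]. intros s t Hst. unfold T in *.
    rewrite rev_app_distr in Hst. eapply tgood_app; eauto.
  - intros s Ts. destruct s as [|a s'] using rev_ind; [exact Bb|].
    apply Tsnoc in Ts. rewrite fsnoc. apply Ts.
  - split.
    + unfold f; simpl. tauto.
    + intros s a Ts Ta. apply Tsnoc in Ta. rewrite fsnoc. apply Ta.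
  - intros s a Ts Ta. apply Tsnoc in Ta. rewrite fsnoc. apply Ta.
  - split.
    + apply K1; auto.
    + intros e He. apply (K2 alpha [] T0 eq_refl); auto.
Qed.

Definition Afam {D} (le : D -> D -> Prop) (B A : D -> Prop) alpha (beta : Ord) (x : D) : Prop :=
  exists b, B b /\ way_below le b x /\ exists g e, rkle le B A b g /\ good alpha (A b) g e /\ ole e beta.

Lemma part2a {D} (le : D -> D -> Prop) (B A : D -> Prop) (HA : Delta02 le A) alpha
  (Hc : continuous_domain le B) :
  ~ exists_alt_tree le B A alpha -> in_Dalpha le alpha A.
Proof.
  intro Hno. pose proof (proj1 Hc) as Hd.
  exists (Afam le B A alpha). split; [|split].
  - intros b b' _ Heq x. unfold Afam. split; intros [c [Bc [Hcx [g [e [H1 [H2 H3]]]]]]];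
      exists c; split; auto; split; auto; exists g, e; split; auto; split; auto;
      eapply ole_trans; eauto; apply Heq.
  - intros beta _. split.
    + intros x y [c [Bc [Hcx Hr]]] Hxy. exists c. split; auto. split; auto.
      eapply wb_le_trans; eauto.
    + intros S x dS sS [c [Bc [Hcx Hr]]].
      destruct (interp le B Hc c x Hcx) as [c' [Bc' [H1 H2]]].
      destruct (wb_sup le c' x S H2 dS sS) as [s [Ss Hs]].
      exists s. split; auto. exists c. split; auto. split; auto.
      eapply wb_le_trans; eauto.
  - intro x. split.
    + intro Ax.
      destruct (robust le B A Hc HA x) as [c [Bc [Hcx Hr]]].
      assert (Ac : A c).
      { apply Hr; auto. apply (proj1 Hd). eapply wb_le; eauto. }
      destruct (bound_rk le B A alpha c Hno Bc Ac) as [g [Hg Hrk]].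
      destruct (good_ex alpha (A c) g) as [e He].
      assert (Hea : olt e alpha).
      { destruct He as [He1 [He2 [He3 _]]].
        destruct (ole_total alpha e) as [Hl|Hl]; auto.
        exfalso. apply (He3 Ac). apply (osim_oeq alpha e alpha).
        - split; auto. eapply ole_trans; eauto.
        - unfold osim; tauto. }
      assert (Hxe : Afam le B A alpha e x).
      { exists c. split; auto. split; auto. exists g, e. split; auto. split; auto. apply ole_refl. }
      destruct (ord_min (fun beta => Afam le B A alpha beta x)) as [beta [Hb1 Hb2]]; [eauto|].
      assert (Hbe : ole beta e).
      { destruct (ole_total beta e) as [?|Hl]; auto. exfalso; eapply Hb2; eauto. }
      destruct Hb1 as [b [Bb [Hbx [g1 [e1 [Hr1 [Hg1 Hl1]]]]]]].
      destruct (lemU le B A Hc HA alpha b x g1 e1 Bb Hbx Hr1 Hg1)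
        as [d [g2 [e2 [Bd [Hdx [Had [Hr2 [Hg2 Hl2]]]]]]]].
      assert (Hxe2 : Afam le B A alpha e2 x).
      { exists d. split; auto. split; auto. exists g2, e2. split; auto. split; auto. apply ole_refl. }
      assert (Heq : oeq beta e2).
      { split.
        - destruct (ole_total beta e2) as [?|Hl]; auto. exfalso; eapply Hb2; eauto.
        - eapply ole_trans; eauto. }
      exists beta. split; [eapply ole_olt_trans; eauto|]. split.
      * rewrite (osim_oeq _ _ _ Heq). apply (proj1 (proj2 (proj2 Hg2))). tauto.
      * split.
        -- exists b. split; auto. split; auto. exists g1, e1. auto.
        -- intros [g0 [Hg0 Hg0']]. eapply Hb2; eauto.
    + intros [beta [Hba [Hbs [Hb1 Hb2]]]].
      destruct Hb1 as [b [Bb [Hbx [g1 [e1 [Hr1 [Hg1 Hl1]]]]]]].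
      destruct (lemU le B A Hc HA alpha b x g1 e1 Bb Hbx Hr1 Hg1)
        as [d [g2 [e2 [Bd [Hdx [Had [Hr2 [Hg2 Hl2]]]]]]]].
      assert (Hxe2 : Afam le B A alpha e2 x).
      { exists d. split; auto. split; auto. exists g2, e2. split; auto. split; auto. apply ole_refl. }
      assert (Heq : oeq beta e2).
      { split.
        - destruct (ole_total beta e2) as [?|Hl]; auto. exfalso; apply Hb2; eauto.
        - eapply ole_trans; eauto. }
      apply NNPP. intro Hnx.
      apply Hbs. rewrite (osim_oeq _ _ _ Heq). apply (proj2 (proj2 (proj2 Hg2))). tauto.
Qed.

Fixpoint hh {X D : Type} (st : D -> D -> D) (f : list X -> D) (r0 : D) (r : list X) : D :=
  match r with
  | [] => r0
  | a :: r' => st (hh st f r0 r') (f (rev (a :: r')))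
  end.

Lemma part2b {D} (le : D -> D -> Prop) (B A : D -> Prop) (HA : Delta02 le A) alpha
  (Hc : continuous_domain le B) :
  exists_alt_tree le B A alpha -> exists_alt_tree (way_below le) B A alpha.
Proof.
  intros [X [T [f [Htree [HB [[Hroot Halt] [Hinc Hrank]]]]]]].
  pose proof (proj1 Hc) as Hd.
  assert (root_ex : forall y, exists d, B d /\ way_below le d y /\ (A d <-> A y)).
  { intro y. destruct (robust le B A Hc HA y) as [c [Bc [Hcy Hr]]].
    exists c. split; auto. split; auto. apply Hr; [apply (proj1 Hd)|eapply wb_le; eauto]. }
  assert (step_ex : forall p y, exists d, way_below le p y ->
            B d /\ way_below le p d /\ way_below le d y /\ (A d <-> A y)).
  { intros p y. destruct (classic (way_below le p y)) as [H|H].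
    - destruct (interp le B Hc p y H) as [c [Bc [H1 H2]]].
      destruct (robust_above le B A Hc HA c y Bc H2) as [d [Bd [Hdy [Hcd Had]]]].
      exists d. intros _. split; auto. split; auto. eapply wb_le_trans; eauto.
    - exists y. intro; contradiction. }
  destruct (constructive_indefinite_description _ (root_ex (f []))) as [r0 Hr0].
  set (st := fun p y => proj1_sig (constructive_indefinite_description _ (step_ex p y))).
  assert (st_spec : forall p y, way_below le p y ->
            B (st p y) /\ way_below le p (st p y) /\ way_below le (st p y) y /\ (A (st p y) <-> A y)).
  { intros p y. exact (proj2_sig (constructive_indefinite_description _ (step_ex p y))). }
  set (g := fun s => hh st f r0 (rev s)).
  assert (gsnoc : forall s a, g (s ++ [a]) = st (g s) (f (s ++ [a]))).
  { intros s a. unfold g. rewrite rev_unit. simpl. rewrite rev_involutive. reflexivity. }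
  assert (Hpre : forall s a, T (s ++ [a]) -> T s) by (intros; eapply (proj2 Htree); eauto).
  assert (Inv : forall s, T s -> B (g s) /\ way_below le (g s) (f s) /\ (A (g s) <-> A (f s))).
  { intro s. induction s as [|a s IH] using rev_ind; intro Ts.
    - unfold g; simpl. tauto.
    - destruct (IH (Hpre _ _ Ts)) as [_ [H2 _]].
      assert (Hw : way_below le (g s) (f (s ++ [a]))).
      { eapply wb_le_trans; [exact Hd|exact H2|]. apply Hinc; [exact (Hpre _ _ Ts)|exact Ts]. }
      rewrite gsnoc. destruct (st_spec _ _ Hw) as [? [? [? ?]]]. auto. }
  exists X, T, g. split; [auto|split; [|split; [|split]]].
  - intros s Ts. apply (Inv s Ts).
  - split.
    + rewrite <- Hroot.
      assert (T0 : T []) by (destruct Htree as [[s0 Hs0] Hp]; exact (Hp [] s0 Hs0)).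
      apply (Inv [] T0).
    + intros s a Ts Ta. rewrite (proj2 (proj2 (Inv _ Ta))), (proj2 (proj2 (Inv _ Ts))). auto.
  - intros s a Ts Ta. rewrite gsnoc. apply st_spec. eapply wb_le_trans; [exact Hd|apply (Inv s Ts)|]. apply Hinc; auto.
  - auto.
Qed.

Theorem theorem4p7 (D : Type) (le : D -> D -> Prop) (Hdcpo : is_dcpo le)
  (B A : D -> Prop) (HA : Delta02 le A) (alpha : Ord) (Halpha : olt OZ alpha) :
  (in_Dalpha le alpha A -> ~ exists_alt_tree le B A alpha) /\
  (continuous_domain le B ->
     (in_Dalpha le alpha A <-> ~ exists_alt_tree le B A alpha) /\
     (~ exists_alt_tree le B A alpha <-> ~ exists_alt_tree (way_below le) B A alpha)).
Proof.
  split.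
  - apply part1.
  - intro Hc. split.
    + split; [apply part1|apply part2a; auto].
    + split.
      * intros Hn [X [T [f [Ht [HB [Halt [Hinc Hr]]]]]]]. apply Hn.
        exists X, T, f. split; [auto|split; [auto|split; [auto|split; [|auto]]]].
        intros s a Ts Ta. apply (wb_le le Hdcpo). apply Hinc; auto.
      * intros Hn Hl. apply Hn. apply part2b; auto.
Qed.
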